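(* Let $f:\mathbb{R}^d\to\mathbb{R}$ be $\beta$-smooth with minimum value $f^\star$, and run AdaSGD (as defined in the context) for $T$ steps with parameters $\eta,\gamma>0$ using a stochastic gradient oracle with bounded affine noise with parameters $\sigma_0,\sigma_1\ge0$. Then, with $G_t=\sqrt{\gamma^2+\sum_{s=1}^t\|g_s\|^2}$, $$\sum_{t=1}^T\frac{\|g_t\|^2}{G_t^2}\le C_1:=\log\Big(1+\frac{2\sigma_0^2T+8(1+\sigma_1^2)(\eta^2\beta^2T^3+\beta\Delta_1T)}{\gamma^2}\Big),$$ where $\Delta_1=f(w_1)-f^\star$.
   Context: $\|\cdot\|$ is the Euclidean norm and $\log$ the base-2 logarithm. $\beta$-smooth: $\|\nabla f(x)-\nabla f(y)\|\le\beta\|x-y\|$. Oracle: queried at $w$, returns random $g(w)$ with $\mathbb{E}[g(w)\mid w]=\nabla f(w)$ and, with probability one, $\|g(w)-\nabla f(w)\|^2\le\sigma_0^2+\sigma_1^2\|\nabla f(w)\|^2$. AdaSGD: arbitrary $w_1$; for $t=1,\dots,T$, $g_t=g(w_t)$, $\eta_t=\eta/\sqrt{\gamma^2+\sum_{s=1}^t\|g_s\|^2}$, $w_{t+1}=w_t-\eta_tg_t$. *)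

(* Defs.v *)
From HB Require Import structures.
From mathcomp Require Import all_boot all_order all_algebra.
From mathcomp Require Import all_classical all_reals all_analysis.
Set Implicit Arguments. Unset Strict Implicit. Unset Printing Implicit Defensive.
Import Order.TTheory GRing.Theory Num.Theory.
Import numFieldNormedType.Exports.
Local Open Scope ring_scope.

(* Euclidean inner product and Euclidean norm on R^d = 'rV[R]_d
   (the library's canonical norm on matrices is the max-norm, so we
   define the Euclidean one explicitly). *)
Definition dotv {R : realType} {d : nat} (x y : 'rV[R]_d) : R :=
  \sum_(i < d) x ord0 i * y ord0 i.
Definition sqnorm {R : realType} {d : nat} (x : 'rV[R]_d) : R := dotv x x.
Definition enorm {R : realType} {d : nat} (x : 'rV[R]_d) : R := Num.sqrt (sqnorm x).

Definition log2 {R : realType} (x : R) : R := ln x / ln 2.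

Definition is_gradient {R : realType} {d : nat}
  (f : 'rV[R]_d -> R) (gradf : 'rV[R]_d -> 'rV[R]_d) : Prop :=
  forall x, differentiable f x /\ forall h, 'd f x h = dotv (gradf x) h.

Definition smooth {R : realType} {d : nat} (beta : R)
  (gradf : 'rV[R]_d -> 'rV[R]_d) : Prop :=
  forall x y, enorm (gradf x - gradf y) <= beta * enorm (x - y).

Definition Gacc {R : realType} {d : nat} (gamma : R) (g : nat -> 'rV[R]_d)
  (t : nat) : R :=
  Num.sqrt (gamma ^+ 2 + \sum_(1 <= s < t.+1) enorm (g s) ^+ 2).

(* Main.v *)
Require Import Defs.
From HB Require Import structures.
From mathcomp Require Import all_boot all_order all_algebra.
From mathcomp Require Import all_classical all_reals all_analysis.
From mathcomp Require Import ring lra.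
Import Order.TTheory GRing.Theory Num.Theory.
Import numFieldNormedType.Exports.
Set Implicit Arguments. Unset Strict Implicit.
Local Open Scope ring_scope.

Lemma sqnorm_ge0 (R : realType) d (x : 'rV[R]_d) : 0 <= sqnorm x.
Proof. by rewrite /sqnorm /dotv; apply: sumr_ge0 => i _; rewrite -expr2 sqr_ge0. Qed.

Lemma enorm_ge0 (R : realType) d (x : 'rV[R]_d) : 0 <= enorm x.
Proof. exact: sqrtr_ge0. Qed.

Lemma enorm_sq (R : realType) d (x : 'rV[R]_d) : enorm x ^+ 2 = sqnorm x.
Proof. by rewrite /enorm sqr_sqrtr // sqnorm_ge0. Qed.

Lemma dotvC (R : realType) d (x y : 'rV[R]_d) : dotv x y = dotv y x.
Proof. by apply: eq_bigr => i _; rewrite mulrC. Qed.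

Lemma dotvDl (R : realType) d (x y z : 'rV[R]_d) :
  dotv (x + y) z = dotv x z + dotv y z.
Proof. by rewrite /dotv -big_split; apply: eq_bigr => i _; rewrite !mxE mulrDl. Qed.

Lemma dotvNl (R : realType) d (x z : 'rV[R]_d) : dotv (- x) z = - dotv x z.
Proof. by rewrite /dotv -sumrN; apply: eq_bigr => i _; rewrite !mxE mulNr. Qed.

Lemma dotvBl (R : realType) d (x y z : 'rV[R]_d) :
  dotv (x - y) z = dotv x z - dotv y z.
Proof. by rewrite dotvDl dotvNl. Qed.

Lemma dotvZl (R : realType) d (c : R) (x z : 'rV[R]_d) :
  dotv (c *: x) z = c * dotv x z.
Proof. by rewrite /dotv mulr_sumr; apply: eq_bigr => i _; rewrite !mxE mulrA. Qed.

Lemma sqnormZ (R : realType) d (c : R) (x : 'rV[R]_d) :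
  sqnorm (c *: x) = c ^+ 2 * sqnorm x.
Proof. by rewrite /sqnorm dotvZl dotvC dotvZl mulrA expr2. Qed.

Lemma enormZ (R : realType) d (c : R) (x : 'rV[R]_d) :
  enorm (c *: x) = `|c| * enorm x.
Proof. by rewrite /enorm sqnormZ sqrtrM ?sqr_ge0 // sqrtr_sqr. Qed.

Lemma aux2 (R : realType) (u v : R) : (u + v) * (u + v) <= 2 * (u * u) + 2 * (v * v).
Proof. have := sqr_ge0 (u - v); rewrite expr2; nra. Qed.

Lemma aux4 (R : realType) (p q r s : R) : (p * s - r * q) ^+ 2 =
  p * p * (s * s) + q * q * (r * r) - 2 * (p * q * (r * s)).
Proof. ring. Qed.

Lemma sqnormD2 (R : realType) d (x y : 'rV[R]_d) :
  sqnorm (x + y) <= 2 * sqnorm x + 2 * sqnorm y.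
Proof.
rewrite /sqnorm /dotv !mulr_sumr -big_split; apply: ler_sum => i _.
rewrite !mxE; apply: aux2.
Qed.

Lemma cauchy_schwarz2 (R : realType) d (x y : 'rV[R]_d) :
  dotv x y ^+ 2 <= sqnorm x * sqnorm y.
Proof.
set a := fun i => x ord0 i; set b := fun i => y ord0 i.
have E : \sum_(i < d) \sum_(j < d) (a i * b j - a j * b i) ^+ 2
   = 2 * (sqnorm x * sqnorm y - dotv x y ^+ 2).
  have -> : \sum_(i < d) \sum_(j < d) (a i * b j - a j * b i) ^+ 2 =
     \sum_(i < d) \sum_(j < d) ((a i * a i) * (b j * b j))
   + \sum_(i < d) \sum_(j < d) ((b i * b i) * (a j * a j))
   - 2 * \sum_(i < d) \sum_(j < d) ((a i * b i) * (a j * b j)).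
    rewrite mulr_sumr -big_split -sumrB; apply: eq_bigr => i _.
    rewrite mulr_sumr -big_split -sumrB; apply: eq_bigr => j _.
    exact: aux4.
  have H : forall (u v : 'I_d -> R), \sum_(i < d) \sum_(j < d) (u i * v j)
      = (\sum_(i < d) u i) * (\sum_(j < d) v j).
    move=> u v; rewrite mulr_suml; apply: eq_bigr => i _; by rewrite mulr_sumr.
  rewrite !H /sqnorm /dotv -/a -/b expr2; ring.
have : 0 <= \sum_(i < d) \sum_(j < d) (a i * b j - a j * b i) ^+ 2.
  by apply: sumr_ge0 => i _; apply: sumr_ge0 => j _; apply: sqr_ge0.
rewrite E; nra.
Qed.

Lemma cauchy_schwarz (R : realType) d (x y : 'rV[R]_d) :
  dotv x y <= enorm x * enorm y.
Proof.
apply: le_trans (ler_norm _) _.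
rewrite -sqrtr_sqr /enorm -sqrtrM ?sqnorm_ge0 //.
by apply: ler_wsqrtr; apply: cauchy_schwarz2.
Qed.

Lemma enormD (R : realType) d (x y : 'rV[R]_d) :
  enorm (x + y) <= enorm x + enorm y.
Proof.
have h1 := cauchy_schwarz x y.
have h2 := enorm_ge0 x; have h3 := enorm_ge0 y; have h4 := enorm_ge0 (x + y).
have : enorm (x + y) ^+ 2 <= (enorm x + enorm y) ^+ 2.
  rewrite enorm_sq /sqnorm dotvDl (dotvC x) (dotvC y) !dotvDl.
  rewrite -/(sqnorm x) -/(sqnorm y) -!enorm_sq (dotvC y x). nra.
rewrite ler_pXn2r // ?nnegrE //; exact: addr_ge0.
Qed.

Lemma phi_deriv (R : realType) d (f : 'rV[R]_d -> R) gradf :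
  is_gradient f gradf -> forall x h (s : R),
  is_derive s 1 (fun s : R => f (s *: h + x)) (dotv (gradf (s *: h + x)) h).
Proof.
move=> Hg x h s.
have E : (fun t : R => t^-1 *: (((fun s : R => f (s *: h + x)) \o shift s) (t *: 1)
                              - f (s *: h + x)))
       = (fun t : R => t^-1 *: ((f \o shift (s *: h + x)) (t *: h) - f (s *: h + x))).
  apply/funext => t /=; congr (_ *: (f _ - _)).
  by rewrite [t *: 1]mulr1 scalerDl addrA.
have Hd := (Hg (s *: h + x)).1.
apply: DeriveDef.
  by rewrite /derivable E; exact: diff_derivable.
transitivity ('D_h f (s *: h + x)); first by rewrite /derive E.
by rewrite deriveE // (Hg _).2.
Qed.

Lemma descent (R : realType) d (f : 'rV[R]_d -> R) gradf (beta : R) :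
  is_gradient f gradf -> smooth beta gradf -> forall x h,
  f (h + x) <= f x + dotv (gradf x) h + beta / 2 * sqnorm h.
Proof.
move=> Hg Hs x h.
set c0 := dotv (gradf x) h; set k := beta / 2 * sqnorm h.
pose psi := fun s : R => f (s *: h + x) - s * c0 - k * (s * s).
pose dpsi := fun s : R => dotv (gradf (s *: h + x)) h - c0 - k * (s + s).
have Dpsi : forall s : R, is_derive s (1 : R) psi (dpsi s).
  move=> s.
  have H1 : is_derive s (1:R) (fun s : R => s * c0) c0.
    have H := is_deriveM (is_derive_id s (1:R)) (is_derive_cst c0 s (1:R)).
    apply: (is_derive_eq H).
    by rewrite /= scaler0 add0r [_ *: 1]mulr1.
  have H2 : is_derive s (1:R) (fun s : R => k * (s * s)) (k * (s + s)).
    have H := is_deriveZ k (is_deriveM (is_derive_id s (1:R)) (is_derive_id s (1:R))).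
    apply: (is_derive_eq H).
    by rewrite /= [s%:A]mulr1.
  exact: (is_deriveB (is_deriveB (phi_deriv Hg x h s) H1) H2).
have [c cI Ec] : exists2 c, c \in `]0, 1[%R & psi 1 - psi 0 = dpsi c * (1 - 0).
  apply: (@MVT R psi dpsi 0 1 ltr01 (fun s _ => Dpsi s)).
  apply: derivable_within_continuous => s sI.
  exact: (Dpsi s).(ex_derive).
have c0lt : 0 < c by move: cI; rewrite in_itv /= => /andP[].
have Hd : dpsi c <= 0.
  rewrite /dpsi /c0 -dotvBl.
  have := cauchy_schwarz (gradf (c *: h + x) - gradf x) h.
  have := Hs (c *: h + x) x; rewrite addrK enormZ gtr0_norm //.
  have := enorm_ge0 h; have := enorm_ge0 (gradf (c *: h + x) - gradf x).
  rewrite /k -enorm_sq. move: cI; rewrite in_itv /= => /andP[_ c1].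
  nra.
move: Ec; rewrite /psi scale1r scale0r add0r subr0 mulr1 !mul0r !mulr0 !subr0.
nra.
Qed.

Lemma sqnorm_eq0 (R : realType) d (v : 'rV[R]_d) : sqnorm v = 0 -> v = 0.
Proof.
move=> H; apply/matrixP => i j; rewrite (ord1 i) mxE.
have P0 : forall k : 'I_d, true -> 0 <= v ord0 k * v ord0 k.
  by move=> k _; rewrite -expr2 sqr_ge0.
have := @psumr_eq0P R _ predT (fun k => v ord0 k * v ord0 k) P0 H j isT.
by move/eqP; rewrite mulf_eq0 orbb => /eqP.
Qed.

Lemma neg_beta_zero (R : realType) d (gradf : 'rV[R]_d -> 'rV[R]_d) (beta : R) :
  smooth beta gradf -> beta < 0 -> forall v : 'rV[R]_d, v = 0.
Proof.
move=> Hs bn v; apply: sqnorm_eq0; rewrite -enorm_sq.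
have := Hs v 0; rewrite subr0.
have := enorm_ge0 (gradf v - gradf 0); have := enorm_ge0 v.
move=> h1 h2 h3.
have : enorm v = 0 by nra.
by move=> ->; rewrite expr2 mulr0.
Qed.

Lemma grad_bound (R : realType) d (f : 'rV[R]_d -> R) gradf (beta fstar : R) :
  is_gradient f gradf -> smooth beta gradf -> (exists wstar, f wstar = fstar) ->
  (forall x, fstar <= f x) ->
  forall x, sqnorm (gradf x) <= 2 * beta * (f x - fstar).
Proof.
move=> Hg Hs [ws Hws] Hlow x.
have [bn|bp] := ltP beta 0.
  have -> : gradf x = 0 by apply: (neg_beta_zero Hs bn).
  have -> : x = ws by rewrite (neg_beta_zero Hs bn x) (neg_beta_zero Hs bn ws).
  rewrite Hws subrr mulr0 /sqnorm /dotv big1 // => i _; rewrite mxE mul0r.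
  by [].
set G := sqnorm (gradf x).
have key : forall t : R, fstar <= f x - t * G + beta / 2 * (t ^+ 2 * G).
  move=> t; apply: (le_trans (Hlow ((- t) *: gradf x + x))).
  apply: (le_trans (descent Hg Hs x ((- t) *: gradf x))).
  by rewrite sqnormZ sqrrN dotvC dotvZl mulNr.
have G0 : 0 <= G by apply: sqnorm_ge0.
have D0 : 0 <= f x - fstar by rewrite subr_ge0.
have [b0|bpos] := eqVneq beta 0.
  rewrite b0 mulr0 mul0r.
  have [Gz|Gpos] := eqVneq G 0; first by rewrite Gz.
  have Gp : 0 < G by rewrite lt0r Gpos.
  have := key ((f x - fstar + 1) / G).
  rewrite b0 !mul0r addr0 divfK ?gt_eqF //.
  move=> H; exfalso; move: H; apply/negP; rewrite -ltNge; lra.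
have bp' : 0 < beta by rewrite lt0r bpos.
have := key (beta^-1).
have -> : beta / 2 * (beta^-1 ^+ 2 * G) = beta^-1 * G / 2.
  by field; rewrite gt_eqF.
move=> H.
have : beta^-1 * G <= 2 * (f x - fstar) by lra.
rewrite mulrC -ler_pdivlMr ?invr_gt0 // invrK.
by rewrite mulrAC.
Qed.

Lemma log_step (R : realType) (B a : R) : 0 < B -> 0 <= a ->
  a / (B + a) <= ln (B + a) - ln B.
Proof.
move=> B0 a0.
have Ba : 0 < B + a by lra.
have x1 : -1 < - (a / (B + a)).
  rewrite ltrNl opprK ltr_pdivrMr // mul1r; lra.
have := le_ln1Dx x1.
have -> : 1 + - (a / (B + a)) = B / (B + a) by field; rewrite gt_eqF.
rewrite ln_div ?posrE //; lra.
Qed.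

Lemma log_sum (R : realType) (a : nat -> R) (gam2 : R) :
  0 < gam2 -> (forall t, 0 <= a t) -> forall T,
  \sum_(1 <= t < T.+1) a t / (gam2 + \sum_(1 <= s < t.+1) a s)
    <= ln (gam2 + \sum_(1 <= s < T.+1) a s) - ln gam2.
Proof.
move=> g0 a0; elim=> [|T IH].
  by rewrite !big_geq // addr0 subrr.
rewrite big_nat_recr //= [\sum_(1 <= s < T.+2) a s]big_nat_recr //=.
have S0 : 0 <= \sum_(1 <= s < T.+1) a s by apply: sumr_ge0.
have := log_step (B := gam2 + \sum_(1 <= s < T.+1) a s) (a := a T.+1) _ (a0 _).
rewrite addrA; move=> H; have := H ltac:(lra); lra.
Qed.

Theorem lemma6 (R : realType) (d : nat)
  (f : 'rV[R]_d -> R) (gradf : 'rV[R]_d -> 'rV[R]_d) (beta fstar : R)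
  (eta gamma sigma0 sigma1 : R) (T : nat)
  (w g : nat -> 'rV[R]_d) :
  is_gradient f gradf ->
  smooth beta gradf ->
  (exists wstar, f wstar = fstar) ->
  (forall x, fstar <= f x) ->
  0 < eta -> 0 < gamma -> 0 <= sigma0 -> 0 <= sigma1 ->
  (forall t, (1 <= t <= T)%N ->
     enorm (g t - gradf (w t)) ^+ 2
       <= sigma0 ^+ 2 + sigma1 ^+ 2 * enorm (gradf (w t)) ^+ 2) ->
  (forall t, (1 <= t <= T)%N ->
     w t.+1 = w t - (eta / Gacc gamma g t) *: g t) ->
  \sum_(1 <= t < T.+1) enorm (g t) ^+ 2 / Gacc gamma g t ^+ 2
    <= log2 (1 + (2 * sigma0 ^+ 2 * T%:R
                  + 8 * (1 + sigma1 ^+ 2)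
                      * (eta ^+ 2 * beta ^+ 2 * T%:R ^+ 3
                         + beta * (f (w 1%N) - fstar) * T%:R))
                 / gamma ^+ 2).
Proof.
move=> Hg Hs Hst Hlow eta0 gam0 s00 s10 Hnoise Hupd.
set D := f (w 1%N) - fstar.
have D0 : 0 <= D by rewrite /D subr_ge0.
set a := fun t => enorm (g t) ^+ 2.
have a0 : forall t, 0 <= a t by move=> t; rewrite /a sqr_ge0.
have gam2 : 0 < gamma ^+ 2 by rewrite exprn_gt0.
have GaccE : forall t, Gacc gamma g t ^+ 2 = gamma ^+ 2 + \sum_(1 <= s < t.+1) a s.
  move=> t; rewrite /Gacc sqr_sqrtr //; apply: addr_ge0; first exact: sqr_ge0.
  by apply: sumr_ge0 => s _; exact: sqr_ge0.
set K := 2 * sigma0 ^+ 2 + 8 * (1 + sigma1 ^+ 2) * (eta ^+ 2 * beta ^+ 2 * T%:R ^+ 2 + beta * D).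
have Hstep : forall t, (1 <= t <= T)%N -> a t <= K.
  move=> t Ht.
  have [bn|bp] := ltP beta 0.
    have Z := neg_beta_zero Hs bn.
    have -> : a t = 0.
      rewrite /a (Z (g t)) /enorm /sqnorm /dotv big1 ?sqrtr0 ?expr0n // => i _.
      by rewrite mxE mul0r.
    rewrite /K.
    have -> : D = 0.
      by case: Hst => ws Hws; rewrite /D (Z (w 1%N)) -(Z ws) Hws subrr.
    rewrite mulr0 addr0 -!exprMn.
    have := sqr_ge0 sigma0; have := sqr_ge0 sigma1; have := sqr_ge0 (eta * beta * T%:R).
    nra.
  have Hpath : forall k, (k <= T)%N -> enorm (w k.+1 - w 1%N) <= eta * k%:R.
    elim=> [|k IH] Hk.
      rewrite subrr /enorm /sqnorm /dotv big1 ?sqrtr0 ?mulr0 // => i _.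
      by rewrite mxE mul0r.
    rewrite Hupd; last by apply/andP; split.
    have -> : w k.+1 - (eta / Gacc gamma g k.+1) *: g k.+1 - w 1%N
        = (w k.+1 - w 1%N) + (- (eta / Gacc gamma g k.+1)) *: g k.+1.
      by rewrite scaleNr addrAC.
    apply: (le_trans (enormD _ _)).
    have Gpos : 0 < Gacc gamma g k.+1.
      rewrite /Gacc sqrtr_gt0.
      have : 0 <= \sum_(1 <= s < k.+2) enorm (g s) ^+ 2.
        by apply: sumr_ge0 => s _; exact: sqr_ge0.
      lra.
    have eg : enorm (g k.+1) <= Gacc gamma g k.+1.
      rewrite /enorm /Gacc; apply: ler_wsqrtr.
      rewrite big_nat_recr //= enorm_sq.
      have : 0 <= \sum_(1 <= s < k.+1) enorm (g s) ^+ 2.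
        by apply: sumr_ge0 => s _; exact: sqr_ge0.
      have := sqr_ge0 gamma; lra.
    rewrite enormZ normrN ger0_norm; last by apply: divr_ge0; lra.
    have H1 : eta / Gacc gamma g k.+1 * enorm (g k.+1) <= eta.
      rewrite mulrAC ler_pdivrMr // ler_pM2l //.
    have := IH (ltnW Hk).
    have -> : (k.+1)%:R = k%:R + 1 :> R by rewrite -addn1 natrD.
    rewrite mulrDr mulr1; lra.
  case: t Ht => [|k] //= Hk.
  have Hp := Hpath k (ltnW Hk).
  have Gb := grad_bound Hg Hs Hst Hlow (w 1%N).
  rewrite -/D -enorm_sq in Gb.
  set e1 := enorm (gradf (w 1%N)) in Gb.
  set et := enorm (gradf (w k.+1)).
  have e10 : 0 <= e1 by apply: enorm_ge0.
  have et0 : 0 <= et by apply: enorm_ge0.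
  have Het : et <= e1 + beta * (eta * T%:R).
    have := enormD (gradf (w 1%N)) (gradf (w k.+1) - gradf (w 1%N)).
    rewrite addrC subrK -/et -/e1 => H.
    have := Hs (w k.+1) (w 1%N).
    have : k%:R <= T%:R :> R by rewrite ler_nat ltnW.
    move=> HkT Hsm.
    have : beta * (eta * k%:R) <= beta * (eta * T%:R).
      by apply: ler_wpM2l => //; apply: ler_wpM2l => //; lra.
    have : beta * enorm (w k.+1 - w 1%N) <= beta * (eta * k%:R).
      by apply: ler_wpM2l.
    lra.
  have Het2 : et ^+ 2 <= 4 * (eta ^+ 2 * beta ^+ 2 * T%:R ^+ 2 + beta * D).
    have hb : 0 <= beta * (eta * T%:R).
      by apply: mulr_ge0 => //; apply: mulr_ge0; [exact: ltW | exact: ler0n].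
    have : et ^+ 2 <= (e1 + beta * (eta * T%:R)) ^+ 2.
      by rewrite ler_pXn2r // ?nnegrE //; lra.
    have := sqr_ge0 (e1 - beta * (eta * T%:R)).
    have -> : eta ^+ 2 * beta ^+ 2 * T%:R ^+ 2 = (beta * (eta * T%:R)) ^+ 2.
      by rewrite !exprMn mulrCA mulrA.
    rewrite !expr2; nra.
  have Hn := Hnoise k.+1 Hk.
  rewrite -/et in Hn.
  have Ha : a k.+1 <= 2 * enorm (g k.+1 - gradf (w k.+1)) ^+ 2 + 2 * et ^+ 2.
    rewrite /a /et !enorm_sq.
    have := sqnormD2 (g k.+1 - gradf (w k.+1)) (gradf (w k.+1)).
    by rewrite subrK.
  rewrite /K.
  have := sqr_ge0 sigma1.
  set s1 := sigma1 ^+ 2 in Hn *.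
  set E := et ^+ 2 in Het2 Ha Hn *.
  set M := eta ^+ 2 * beta ^+ 2 * T%:R ^+ 2 + beta * D in Het2 *.
  nra.
have HA : \sum_(1 <= s < T.+1) a s <= K * T%:R.
  apply: (le_trans (y := \sum_(1 <= s < T.+1) K)).
    rewrite big_nat [X in _ <= X]big_nat; apply: ler_sum => s Hs'; exact: Hstep.
  by rewrite sumr_const_nat subn1 /= mulr_natr.
have HX : K * T%:R = 2 * sigma0 ^+ 2 * T%:R
                  + 8 * (1 + sigma1 ^+ 2)
                      * (eta ^+ 2 * beta ^+ 2 * T%:R ^+ 3
                         + beta * D * T%:R) by rewrite /K; ring.
rewrite -HX.
set X := K * T%:R in HA HX *.
set A := \sum_(1 <= s < T.+1) a s in HA.
have A0 : 0 <= A by apply: sumr_ge0 => s _; exact: a0.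
have L1 : \sum_(1 <= t < T.+1) enorm (g t) ^+ 2 / Gacc gamma g t ^+ 2 <= ln (1 + A / gamma ^+ 2).
  have -> : \sum_(1 <= t < T.+1) enorm (g t) ^+ 2 / Gacc gamma g t ^+ 2 =
     \sum_(1 <= t < T.+1) a t / (gamma ^+ 2 + \sum_(1 <= s < t.+1) a s).
    by apply: eq_bigr => t _; rewrite GaccE.
  apply: (le_trans (log_sum gam2 a0 T)).
  rewrite -/A -ln_div ?posrE; [|lra|done].
  by rewrite mulrDl divff ?gt_eqF // addrC.
have L2 : ln (1 + A / gamma ^+ 2) <= ln (1 + X / gamma ^+ 2).
  rewrite ler_ln ?posrE.
  - by rewrite lerD2l ler_pM2r ?invr_gt0.
  - by have := divr_ge0 A0 (ltW gam2); lra.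
  - by have := divr_ge0 (le_trans A0 HA) (ltW gam2); lra.
apply: (le_trans L1); apply: (le_trans L2).
have Y1 : 0 <= ln (1 + X / gamma ^+ 2).
  by apply: ln_ge0; have := divr_ge0 (le_trans A0 HA) (ltW gam2); lra.
have l2 : 0 < ln (2 : R) by apply: ln_gt0; lra.
have l21 : ln (2 : R) <= 1 by have := @le_ln1Dx R 1 ltac:(lra); rewrite (_ : 1 + 1 = 2) //.
rewrite /log2 ler_pdivlMr //.
by rewrite -[X in _ <= X]mulr1; apply: ler_wpM2l.
Qed.
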